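(* With $\tilde h_n(q)=q^{n(n-1)/2}h_n(q^{-1})$, one has, as formal power series in $s$, $$\sum_{n\ge0}\tilde h_n(q)s^n=\cfrac{1}{1-\cfrac{c_1 s}{1-\cfrac{c_2 s}{1-\cfrac{c_3 s}{1-\cdots}}}},$$ where $c_{2m-1}=\binom{m+1}{2}_q$ and $c_{2m}=q\binom{m+1}{2}_q$ for $m\ge1$; explicitly $$\sum_{n\ge 0}\tilde h_n(q)s^n=\cfrac{1}{1-\cfrac{s}{1-\cfrac{qs}{1-\cfrac{\binom{3}{2}_q s}{1-\cfrac{q\binom{3}{2}_q s}{1-\cfrac{\binom{4}{2}_q s}{1-\cfrac{q\binom{4}{2}_q s}{1-\cdots}}}}}}}.$$
   Context: Gaussian binomial coefficients: for $m\ge k\ge 0$, $\binom{m}{k}_q=\frac{[m]_q!}{[k]_q!\,[m-k]_q!}$ with $[m]_q!=\prod_{i=1}^m\frac{1-q^i}{1-q}$; set $\binom{m}{k}_q=0$ if $k>m$ or $k<0$. Let $W$ be an $n$-dimensional complex vector space with basis $w_1,\dots,w_n$, and $pr_k:W\to W$ the projection with $pr_k(\sum_i c_iw_i)=\sum_{i\ne k}c_iw_i$. The degenerate flag variety $\mathrm{Fl}^a_n$ is the variety of tuples $(V_1,\dots,V_{n-1})$ of subspaces of $W$ with $\dim V_k=k$ and $pr_{k+1}V_k\subset V_{k+1}$ for $k=1,\dots,n-2$. It admits a cellular decomposition into complex affine cells, so its Poincaré polynomial $P(t)$ involves only even powers of $t$; define $h_n(q)=P(q^{1/2})$, a polynomial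 of degree $n(n-1)/2$ with $h_0(q)=h_1(q)=1$. It is known (Cerulli Irelli–Feigin–Reineke) that $$h_n(q)=\sum_{f_1,\dots,f_{n-1}\ge 0} q^{\sum_{k=1}^{n-1}(k-f_k)(1-f_k+f_{k+1})}\prod_{k=1}^{n-1}\binom{1+f_{k-1}}{f_k}_{\!q}\prod_{k=1}^{n-1}\binom{1+f_{k+1}}{f_k}_{\!q},$$ with the convention $f_0=f_n=0$. *)

(* Defs.v *)
From HB Require Import structures.
From mathcomp Require Import all_boot all_order all_algebra.
Set Implicit Arguments. Unset Strict Implicit. Unset Printing Implicit Defensive.
Import Order.TTheory GRing.Theory Num.Theory.
Local Open Scope ring_scope.

Section Defs.
Variable F : fieldType.

Definition qint (x : F) (i : nat) : F := (1 - x ^+ i) / (1 - x).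

Definition qfact (x : F) (m : nat) : F := \prod_(1 <= i < m.+1) qint x i.

Definition gbin (x : F) (m k : nat) : F :=
  if (k <= m)%N then qfact x m / (qfact x k * qfact x (m - k)) else 0.

(* the sequence f_0, ..., f_n from f : 'I_(n-1) -> 'I_(n+1),
   f_k := f (k-1) for 1 <= k <= n-1, and f_0 = f_n = 0 *)
Definition fval (n : nat) (f : {ffun 'I_n.-1 -> 'I_n.+1}) (k : nat) : nat :=
  match k with
  | 0 => 0%N
  | k'.+1 => if @insub _ (fun i => i < n.-1)%N _ k' is Some i
             then nat_of_ord (f i) else 0%N
  end.

(* The Cerulli Irelli--Feigin--Reineke formula for h_n, evaluated at x.
   Only tuples with 0 <= f_k <= n contribute (others have a vanishing
   Gaussian binomial factor). *)
Definition hpoly (n : nat) (x : F) : F :=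
  \sum_(f : {ffun 'I_n.-1 -> 'I_n.+1})
    x ^ (\sum_(1 <= k < n)
           ((k%:Z - (fval f k)%:Z) * (1 - (fval f k)%:Z + (fval f k.+1)%:Z)))%R
    * \prod_(1 <= k < n) gbin x (1 + fval f k.-1) (fval f k)
    * \prod_(1 <= k < n) gbin x (1 + fval f k.+1) (fval f k).

Definition htilde (n : nat) (x : F) : F :=
  x ^+ ((n * n.-1) %/ 2) * hpoly n x^-1.

Definition ps := nat -> F.
Definition ps_one : ps := fun n => (n == 0%N)%:R.
Definition ps_mul (f g : ps) : ps := fun n => \sum_(i < n.+1) f i * g (n - i)%N.
Definition ps_pow (f : ps) (k : nat) : ps := iter k (ps_mul f) ps_one.
(* multiplication by c * s *)
Definition ps_cs (c : F) (f : ps) : ps :=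
  fun n => if n is n'.+1 then c * f n' else 0.
(* 1 / (1 - g) for g with zero constant term: sum_k g^k *)
Definition ps_geom (g : ps) : ps := fun n => \sum_(k < n.+1) ps_pow g k n.

Definition cfcoef (x : F) (j : nat) : F :=
  if odd j then gbin x ((j.+1)./2).+1 2 else x * gbin x ((j./2).+1) 2.

(* depth-d truncation of  1/(1 - c_k s/(1 - c_{k+1} s/(1 - ...))),
   the tail below depth d being replaced by 1 *)
Fixpoint cf (x : F) (k d : nat) : ps :=
  match d with
  | 0 => ps_one
  | d'.+1 => ps_geom (ps_cs (cfcoef x k) (cf x k.+1 d'))
  end.

End Defs.

Definition qvar : {fraction {poly int}} := FracField.tofrac 'X.

(* Main.v *)
Require Import Defs.
From HB Require Import structures.
From mathcomp Require Import all_boot all_order all_algebra.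
From mathcomp Require Import zify ring.
Import Order.TTheory GRing.Theory Num.Theory.
Local Open Scope ring_scope.
Set Implicit Arguments. Unset Strict Implicit. Unset Printing Implicit Defensive.

Definition fcons (T : Type) m (t : T) (g : {ffun 'I_m -> T}) : {ffun 'I_m.+1 -> T} :=
  [ffun i : 'I_m.+1 => if unlift ord0 i is Some j then g j else t].

Lemma sum_ffunS (T : finType) (R : nmodType) m (G : {ffun 'I_m.+1 -> T} -> R) :
  \sum_(f : {ffun 'I_m.+1 -> T}) G f =
  \sum_(t : T) \sum_(g : {ffun 'I_m -> T}) G (fcons t g).
Proof.
rewrite pair_big (reindex (fun p : T * {ffun 'I_m -> T} => fcons p.1 p.2)) //=.
apply: onW_bij.
exists (fun f : {ffun 'I_m.+1 -> T} => (f ord0, [ffun j => f (lift ord0 j)])).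
  move=> [t g] /=; congr pair; first by rewrite ffunE unlift_none.
  by apply/ffunP => j; rewrite !ffunE liftK.
move=> f; apply/ffunP => i; rewrite !ffunE /=.
case: unliftP => [j ->|->] //; by rewrite ffunE.
Qed.

Definition gf m K (a : nat) (f : {ffun 'I_m -> 'I_K}) (k : nat) : nat :=
  match k with
  | 0 => a
  | k'.+1 => if @insub _ (fun i => i < m)%N _ k' is Some i then nat_of_ord (f i) else 0%N
  end.

Lemma gf_fcons m K a (t : 'I_K) (g : {ffun 'I_m -> 'I_K}) k :
  gf a (fcons t g) k.+1 = gf t g k.
Proof.
case: k => [|j] /=.
  case: insubP => [u _ hu|]; last by [].
  rewrite ffunE; have -> : u = ord0 by apply/val_inj.
  by rewrite unlift_none.
case: insubP => [u hj hu|hj]; case: insubP => [v hj' hv|hj'] //=.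
- rewrite ffunE; have -> : u = lift ord0 v by apply/val_inj; rewrite /= hu hv.
  by rewrite liftK.
- by move: hj'; rewrite -ltnS hj.
- by move: hj; rewrite ltnS hj'.
Qed.

Section Transfer.
Variable F : fieldType.
Variable V : nat -> nat -> F.

Fixpoint Qs (H m a : nat) : F :=
  match m with
  | 0 => (a == 0)%:R
  | m'.+1 => \sum_(b < H.+1) V a b * Qs H m' b
  end.

Lemma QsS H m a : Qs H m.+1 a = \sum_(b < H.+1) V a b * Qs H m b.
Proof. by []. Qed.

Lemma transfer H m a :
  \sum_(f : {ffun 'I_m -> 'I_H.+1}) \prod_(k < m.+1) V (gf a f k) (gf a f k.+1)
  = Qs H m.+1 a.
Proof.
elim: m a => [|m IH] a.
  have E : forall f : {ffun 'I_0 -> 'I_H.+1},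
      \prod_(k < 1) V (gf a f k) (gf a f k.+1) = V a 0.
    move=> f; rewrite big_ord_recl big_ord0 mulr1 /=.
    by case: insubP => [u|].
  rewrite (eq_bigr _ (fun f _ => E f)) sumr_const card_ffun !card_ord expn0.
  rewrite /= big_ord_recl /= mulr1 big1 ?addr0 ?mul1r // => i _; by rewrite mulr0.
rewrite sum_ffunS QsS.
apply: eq_bigr => t _.
under eq_bigr do rewrite big_ord_recl.
rewrite -IH mulr_sumr; apply: eq_bigr => g _.
have -> : gf a (fcons t g) (@ord0 m.+1).+1 = t by rewrite (gf_fcons a t g 0).
congr (_ * _); apply: eq_bigr => k _.
have -> : (lift ord0 k : nat) = k.+1 by [].
by rewrite !gf_fcons.
Qed.
End Transfer.
Section Trunc.
Variable F : fieldType.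
Variable M : nat.

Definition cz (p : {poly F}) := forall i, (i < M)%N -> p`_i = 0.

Lemma cz0 : cz 0. Proof. by move=> i _; rewrite coef0. Qed.
Lemma czD p q : cz p -> cz q -> cz (p + q).
Proof. by move=> hp hq i hi; rewrite coefD hp ?hq ?addr0. Qed.
Lemma czN p : cz p -> cz (- p).
Proof. by move=> hp i hi; rewrite coefN hp ?oppr0. Qed.
Lemma czMl p q : cz p -> cz (q * p).
Proof.
move=> hp i hi; rewrite coefM big1 // => j _; rewrite hp ?mulr0 //.
by apply: leq_ltn_trans hi; apply: leq_subr.
Qed.
Lemma czMr p q : cz p -> cz (p * q).
Proof. by move=> hp; rewrite mulrC; apply: czMl. Qed.
Lemma cz_eq p q : p = q -> cz p -> cz q. Proof. by move=> ->. Qed.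

Lemma czE (p q : {poly F}) : cz (p - q) -> forall i, (i < M)%N -> p`_i = q`_i.
Proof. by move=> h i hi; apply/eqP; rewrite -subr_eq0 -coefB; apply/eqP/h. Qed.
Lemma czI (p q : {poly F}) : (forall i, (i < M)%N -> p`_i = q`_i) -> cz (p - q).
Proof. by move=> h i hi; rewrite coefB h ?subrr. Qed.

Definition tr (f : ps F) : {poly F} := \poly_(i < M) f i.

Lemma coef_tr f i : (i < M)%N -> (tr f)`_i = f i.
Proof. by move=> hi; rewrite coef_poly hi. Qed.

Lemma tr_mul f g : cz (tr (ps_mul f g) - tr f * tr g).
Proof.
move=> i hi; rewrite coefB coef_tr // coefM /ps_mul; apply/eqP; rewrite subr_eq0; apply/eqP.
apply: eq_bigr => j _; rewrite !coef_tr //.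
  by apply: leq_ltn_trans hi; apply: leq_subr.
by apply: leq_ltn_trans hi; rewrite -ltnS.
Qed.

Lemma tr_cs c f : cz (tr (ps_cs c f) - c%:P * 'X * tr f).
Proof.
move=> i hi; rewrite coefB coef_tr // -mulrA coefCM coefXM.
case: i hi => [|i] hi /=; first by rewrite mulr0 subr0.
by rewrite coef_tr ?subrr //; apply: ltnW.
Qed.

Lemma tr_one : (0 < M)%N -> cz (tr (ps_one F) - 1).
Proof. by move=> hM i hi; rewrite coefB coef_tr // coef1 subrr. Qed.

Lemma tr_pow g k : cz (tr (ps_pow g k) - (tr g) ^+ k).
Proof.
elim: k => [|k IH] i hi.
  by rewrite expr0 coefB coef_tr // coef1 subrr.
have -> : ps_pow g k.+1 = ps_mul g (ps_pow g k) by [].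
rewrite coefB (czE (tr_mul g (ps_pow g k)) hi) exprS.
have := czMl (tr g) IH hi; rewrite mulrBr !coefB => /eqP; rewrite subr_eq0 => /eqP ->.
by rewrite subrr.
Qed.

Lemma pow_low (P : {poly F}) k i : P`_0 = 0 -> (i < k)%N -> (P ^+ k)`_i = 0.
Proof.
move=> P0; elim: k i => [|k IH] i //= hi.
rewrite exprS coefM big1 // => [[j hj]] _ /=.
case: j hj => [|j] hj; first by rewrite P0 mul0r.
rewrite IH ?mulr0 //; lia.
Qed.

Lemma tr_geom g : g 0%N = 0 ->
  cz (tr (ps_geom g) - \sum_(k < M) (tr g) ^+ k).
Proof.
move=> g0 i hi; rewrite coefB coef_tr // coef_sum /ps_geom.
have P0 : (tr g)`_0 = 0 by rewrite coef_tr //; apply: leq_ltn_trans hi.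
have E : forall k, (ps_pow g k) i = ((tr g) ^+ k)`_i.
  by move=> k; rewrite -(coef_tr _ hi); apply: czE (tr_pow g k) i hi.
under eq_bigr do rewrite E.
rewrite (big_ord_widen_cond M (fun _ => true) (fun k => ((tr g) ^+ k)`_i) hi) /=.
rewrite [X in _ - X](bigID (fun k : 'I_M => (k < i.+1)%N)) /=.
rewrite [X in _ - (_ + X)]big1 ?addr0 ?subrr //.
by move=> k; rewrite -leqNgt => hk; apply: pow_low.
Qed.

Lemma geom_sum (P : {poly F}) : P`_0 = 0 -> (0 < M)%N ->
  cz (\sum_(k < M) P ^+ k - (1 + P * \sum_(k < M) P ^+ k)).
Proof.
move=> P0 hM.
have [M' eM] : exists M', M = M'.+1 by exists M.-1; rewrite prednK.
have hPM : cz (P ^+ M) by move=> i hi; apply: pow_low.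
have E : \sum_(k < M) P ^+ k - (1 + P * \sum_(k < M) P ^+ k) = - P ^+ M.
  rewrite eM.
  have S1 : \sum_(k < M'.+1) P ^+ k = 1 + P * \sum_(k < M') P ^+ k.
    rewrite big_ord_recl expr0 mulr_sumr; congr (_ + _).
    by apply: eq_bigr => k _; rewrite exprS.
  have S2 : \sum_(k < M'.+1) P ^+ k = \sum_(k < M') P ^+ k + P ^+ M'.
    by rewrite big_ord_recr.
  rewrite {1}S1 S2 exprS; ring.
by rewrite E; apply: czN.
Qed.

Lemma tr_geom_eq g : g 0%N = 0 -> (0 < M)%N ->
  cz (tr (ps_geom g) - (1 + tr g * tr (ps_geom g))).
Proof.
move=> g0 hM.
have P0 : (tr g)`_0 = 0 by rewrite coef_tr.
set G := tr (ps_geom g); set S := \sum_(k < M) (tr g) ^+ k.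
have h1 : cz (G - S) by apply: tr_geom.
have h2 := geom_sum P0 hM.
apply: (cz_eq (p := (G - S) + (S - (1 + tr g * S)) + tr g * (- (G - S)))).
  rewrite /S; ring.
by apply: czD; [apply: czD|apply: czMl; apply: czN].
Qed.

End Trunc.

Section CF.
Variable F : fieldType.
Variable x : F.
Variables H M : nat.
Hypothesis hM : (0 < M)%N.
Local Notation c := (cfcoef x).

Definition tt k := tr M (cf x k (H.*2.+2 - k)).

Lemma tt_rec k : (k < H.*2.+2)%N ->
  cz M (tt k - (1 + (c k)%:P * 'X * tt k.+1 * tt k)).
Proof.
move=> hk; rewrite /tt.
have -> : (H.*2.+2 - k = (H.*2.+2 - k.+1).+1)%N by rewrite subnSK.
set U := cf x k.+1 _.
have -> : cf x k (H.*2.+2 - k.+1).+1 = ps_geom (ps_cs (c k) U) by [].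
set G := tr M (ps_geom _).
have h1 := tr_geom_eq (M:=M) (g := ps_cs (c k) U) (erefl _) hM.
have h2 := tr_cs (M:=M) (c k) U.
apply: (cz_eq (p := (G - (1 + tr M (ps_cs (c k) U) * G)) + (tr M (ps_cs (c k) U) - (c k)%:P * 'X * tr M U) * G)).
  ring.
by apply: czD => //; apply: czMr.
Qed.

Lemma tt_top : cz M (tt H.*2.+2 - 1).
Proof. by rewrite /tt subnn; apply: tr_one. Qed.

Lemma cfcoef0 : c 0 = 0.
Proof. by rewrite /cfcoef /= /gbin /= mulr0. Qed.

Lemma tt0 : cz M (tt 0 - 1).
Proof.
have h := tt_rec (ltn0Sn _); rewrite cfcoef0 polyC0 !mul0r addr0 in h; exact: h.
Qed.

Variable V : nat -> nat -> F.
Hypothesis hVup : forall a, V a a.+1 = c a.*2.+2.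
Hypothesis hVdn : forall a, V a.+1 a = c a.*2.+1.
Hypothesis hVlv : forall a, V a a = c a.*2 + c a.*2.+1.
Hypothesis hV0 : forall a b, (a.+1 < b)%N || (b.+1 < a)%N -> V a b = 0.

Definition JJ a := tt a.*2 * tt a.*2.+1.
Definition uu a := c a.*2.+2 * (a < H)%:R.

Lemma JJ_rec a : (a <= H)%N ->
  cz M (JJ a - (1 + 'X * (c a.*2 + c a.*2.+1)%:P * JJ a
               + 'X ^+ 2 * (c a.*2.+1 * uu a)%:P * JJ a.+1 * JJ a)).
Proof.
move=> ha.
set A := tt a.*2; set B := tt a.*2.+1; set C := tt a.*2.+2; set D := tt a.*2.+3.
have eA : cz M (A - (1 + (c a.*2)%:P * 'X * B * A)) by apply: tt_rec; lia.
have eB : cz M (B - (1 + (c a.*2.+1)%:P * 'X * C * B)) by apply: tt_rec; lia.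
have eC : cz M (C - (1 + (uu a)%:P * 'X * D * C)).
  rewrite /uu; case: ltnP => hH.
    by rewrite mulr1; apply: tt_rec; lia.
  rewrite mulr0 polyC0 !mul0r addr0 /C.
  have -> : a.*2.+2 = H.*2.+2 by lia.
  exact: tt_top.
have -> : JJ a.+1 = C * D by rewrite /JJ /C /D; congr (tt _ * tt _).
rewrite /JJ -/A -/B.
apply: (cz_eq (p := (A - (1 + (c a.*2)%:P * 'X * B * A)) + A * (B - (1 + (c a.*2.+1)%:P * 'X * C * B))
   + (c a.*2.+1)%:P * 'X * A * B * (C - (1 + (uu a)%:P * 'X * D * C)))).
  rewrite !rmorphD !rmorphM /=; ring.
by apply: czD; [apply: czD => //; apply: czMl|apply: czMl].
Qed.

Fixpoint Psi a : {poly F} :=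
  if a is a'.+1 then JJ a * ('X * (c a'.*2.+1)%:P * Psi a') else JJ 0.

Definition RR a : {poly F} :=
  if a is a'.+1 then 'X * (c a'.*2.+1)%:P * Psi a' else 1.

Lemma PsiE a : Psi a = JJ a * RR a.
Proof. by case: a => [|a] /=; rewrite ?mulr1. Qed.

Lemma sum_ind n j (K : {poly F}) :
  \sum_(b < n) (if (b == j :> nat) then K else 0) = if (j < n)%N then K else 0.
Proof. by rewrite -big_mkcond (big_ord1_eq _ (fun _ => K)). Qed.

Lemma Vpt a b (G : nat -> {poly F}) : (V a b)%:P * G b =
  (if b == a.+1 then (V a a.+1)%:P * G a.+1 else 0) +
  (if b == a then (V a a)%:P * G a else 0) +
  (if b.+1 == a then (V a a.-1)%:P * G a.-1 else 0).
Proof.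
case: (boolP ((a.+1 < b) || (b.+1 < a))%N) => hab.
  rewrite hV0 // polyC0 mul0r.
  have -> : (b == a.+1) = false by lia.
  have -> : (b == a) = false by lia.
  have -> : (b.+1 == a) = false by lia.
  by rewrite !addr0.
have : b = a.+1 \/ b = a \/ b.+1 = a by lia.
case=> [->|[->|<-]].
- have -> : (a.+1 == a) = false by lia.
  have -> : (a.+2 == a) = false by lia.
  by rewrite eqxx !addr0.
- have -> : (a == a.+1) = false by lia.
  have -> : (a.+1 == a) = false by lia.
  by rewrite eqxx add0r addr0.
- have -> : (b == b.+2) = false by lia.
  have -> : (b == b.+1) = false by lia.
  by rewrite eqxx !add0r.
Qed.

Lemma sumV a (G : nat -> {poly F}) : (a <= H)%N ->
  \sum_(b < H.+1) (V a b)%:P * G b =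
  (uu a)%:P * G a.+1 + (c a.*2 + c a.*2.+1)%:P * G a +
  (if a is a'.+1 then (c a'.*2.+1)%:P * G a' else 0).
Proof.
move=> ha.
under eq_bigr do rewrite (Vpt a _ G).
rewrite !big_split /= !sum_ind.
have -> : (a.+1 < H.+1)%N = (a < H)%N by [].
have -> : (a < H.+1)%N by [].
rewrite hVlv /uu; congr (_ + _ + _).
  by case: (a < H)%N; rewrite ?mulr1 ?mulr0 ?polyC0 ?mul0r ?hVup.
case: a ha => [|a] ha /=.
  by rewrite big1 // => b _; case: ifP.
by rewrite sum_ind (_ : (a < H.+1)%N) ?hVdn //; lia.
Qed.

Lemma Psi_rec a : (a <= H)%N ->
  cz M (Psi a - ((a == 0)%:R%:P + 'X * \sum_(b < H.+1) (V a b)%:P * Psi b)).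
Proof.
move=> ha; rewrite sumV //.
have eR : (a == 0)%:R%:P + 'X * (if a is a'.+1 then (c a'.*2.+1)%:P * Psi a' else 0)
          = RR a.
  by case: a {ha} => [|a] /=; rewrite ?mulr0 ?addr0 ?add0r ?mulrA.
have eP : Psi a.+1 = JJ a.+1 * ('X * (c a.*2.+1)%:P * (JJ a * RR a)) by rewrite /= PsiE.
rewrite eP.
apply: (cz_eq (p := RR a * (JJ a - (1 + 'X * (c a.*2 + c a.*2.+1)%:P * JJ a
               + 'X ^+ 2 * (c a.*2.+1 * uu a)%:P * JJ a.+1 * JJ a)))).
  rewrite -eR PsiE -eR rmorphM /=; ring.
by apply: czMl; apply: JJ_rec.
Qed.

Lemma uniq_Qs (Y : nat -> {poly F}) :
  (forall a, (a <= H)%N ->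
     cz M (Y a - ((a == 0)%:R%:P + 'X * \sum_(b < H.+1) (V a b)%:P * Y b))) ->
  forall i, (i < M)%N -> forall a, (a <= H)%N -> (Y a)`_i = Qs V H i a.
Proof.
move=> hY; elim=> [|i IH] hi a ha; rewrite (czE (hY a ha) hi) coefD coefC coefXM /=.
  by rewrite addr0.
rewrite add0r coef_sum; apply: eq_bigr => b _; rewrite coefCM IH //.
  by apply: ltnW.
by rewrite -ltnS.
Qed.

Lemma cf_Qs i : (i < M)%N -> cf x 1 H.*2.+1 i = Qs V H i 0.
Proof.
move=> hi.
rewrite -(uniq_Qs (Y := Psi)) //; last by move=> a ha; apply: Psi_rec.
rewrite /= /JJ /= (czE (M:=M) (p := tt 0 * tt 1) (q := 1 * tt 1)) //; last first.
  by rewrite -mulrBl; apply: czMr; apply: tt0.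
by rewrite mul1r /tt coef_tr // subSS subn0.
Qed.

End CF.

Section Stab.
Variable F : fieldType.
Variable x : F.

Lemma pow_ext (g1 g2 : ps F) i : (forall j, (j <= i)%N -> g1 j = g2 j) ->
  forall k j, (j <= i)%N -> ps_pow g1 k j = ps_pow g2 k j.
Proof.
move=> hg; elim=> [|k IH] j hj //.
rewrite /ps_pow /= -/(ps_pow g1 k) -/(ps_pow g2 k) /ps_mul.
apply: eq_bigr => l _; rewrite hg ?IH //.
  by apply: leq_trans hj; apply: leq_subr.
by apply: leq_trans hj; rewrite -ltnS.
Qed.

Lemma geom_ext (g1 g2 : ps F) i : (forall j, (j <= i)%N -> g1 j = g2 j) ->
  ps_geom g1 i = ps_geom g2 i.
Proof. by move=> hg; apply: eq_bigr => k _; apply: (pow_ext hg). Qed.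

Lemma cf_stab n : forall k d1 d2, (n < d1)%N -> (n < d2)%N ->
  forall i, (i <= n)%N -> cf x k d1 i = cf x k d2 i.
Proof.
elim: n => [|n IH] k [|d1] [|d2] // h1 h2 i hi.
  apply: geom_ext => j hj; have -> : j = 0%N by lia.
  by [].
apply: geom_ext => j hj; case: j hj => [|j] hj //=.
congr (_ * _); apply: IH => //; lia.
Qed.

End Stab.

Lemma bin2S a : 'C(a.+1, 2) = ('C(a, 2) + a)%N.
Proof. by rewrite binS bin1. Qed.

Lemma bin2D a b : 'C(a + b, 2) = ('C(a, 2) + 'C(b, 2) + a * b)%N.
Proof.
elim: b => [|b IH]; first by rewrite addn0 bin0n muln0 !addn0.
by rewrite addnS !bin2S IH; lia.
Qed.

Lemma telescopeN (V : zmodType) (u : nat -> V) n :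
  \sum_(0 <= i < n) (u i - u i.+1) = u 0%N - u n.
Proof.
rewrite -[RHS]opprB -(telescope_sumr _ (leq0n n)) -sumrN.
by apply: eq_bigr => i _; rewrite opprB.
Qed.

Section Gauss.
Variable F : fieldType.

Definition goodq (y : F) := forall i, (0 < i)%N -> 1 - y ^+ i != 0.

Lemma qint_neq0 (y : F) i : goodq y -> (0 < i)%N -> qint y i != 0.
Proof.
move=> hy hi; rewrite /qint mulf_eq0 negb_or hy // invr_eq0.
by rewrite -(expr1 y) hy.
Qed.

Lemma qfactS (y : F) m : qfact y m.+1 = qfact y m * qint y m.+1.
Proof. by rewrite /qfact big_nat_recr. Qed.

Lemma qfact0 (y : F) : qfact y 0 = 1.
Proof. by rewrite /qfact big_geq. Qed.

Lemma qfact_neq0 (y : F) m : goodq y -> qfact y m != 0.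
Proof.
move=> hy; elim: m => [|m IH]; first by rewrite qfact0 oner_eq0.
by rewrite qfactS mulf_neq0 // qint_neq0.
Qed.

Lemma qint1 (y : F) : goodq y -> qint y 1 = 1.
Proof. by move=> hy; rewrite /qint expr1 divff // -(expr1 y) hy. Qed.

Lemma gbin_big (y : F) m k : (m < k)%N -> gbin y m k = 0.
Proof. by move=> h; rewrite /gbin leqNgt h. Qed.

Lemma gbin_nn (y : F) m : goodq y -> gbin y m m = 1.
Proof.
by move=> hy; rewrite /gbin leqnn subnn qfact0 mulr1 divff // qfact_neq0.
Qed.

Lemma gbin_n0 (y : F) m : goodq y -> gbin y m 0 = 1.
Proof.
by move=> hy; rewrite /gbin subn0 qfact0 mul1r divff // qfact_neq0.
Qed.

Lemma gbin_Sn (y : F) m : goodq y -> gbin y m.+1 m = qint y m.+1.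
Proof.
move=> hy; rewrite /gbin leqnSn subSnn qfactS /qfact big_nat1 qint1 // mulr1.
by rewrite -/(qfact y m) mulrC mulKf // qfact_neq0.
Qed.

Lemma gbin_SSn (y : F) m : goodq y ->
  gbin y m.+2 m = qint y m.+2 * qint y m.+1 / qint y 2.
Proof.
move=> hy; rewrite /gbin (leq_trans (leqnSn m) (leqnSn _)).
have -> : (m.+2 - m = 2)%N by rewrite -addn2 addKn.
rewrite !qfactS qfact0 mul1r qint1 // mul1r.
have h1 := qfact_neq0 m hy; have h2 := qint_neq0 hy (ltn0Sn 1).
by field; rewrite h1 h2.
Qed.

Lemma gbin_SS2 (y : F) m : goodq y ->
  gbin y m.+2 2 = qint y m.+2 * qint y m.+1 / qint y 2.
Proof.
move=> hy; rewrite -gbin_SSn // /gbin (_ : (2 <= m.+2)%N) // (_ : (m <= m.+2)%N); last by lia.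
have -> : (m.+2 - 2 = m)%N by lia.
have -> : (m.+2 - m = 2)%N by lia.
by rewrite [qfact y 2 * _]mulrC.
Qed.


Variable x : F.
Hypothesis hx0 : x != 0.
Hypothesis hx : goodq x.

Lemma hx1 : 1 - x != 0. Proof. by rewrite -(expr1 x) hx. Qed.

Lemma goodqV : goodq x^-1.
Proof.
move=> i hi; rewrite exprVn.
have hz : x ^+ i != 0 by rewrite expf_neq0.
have -> : 1 - (x ^+ i)^-1 = - (1 - x ^+ i) / x ^+ i by field.
by rewrite mulf_neq0 ?oppr_eq0 ?hx ?invr_eq0.
Qed.

Lemma qint_inv i : qint x^-1 i = x^-1 ^+ i.-1 * qint x i.
Proof.
case: i => [|j]; first by rewrite /qint !expr0 subrr !mul0r mulr0.
rewrite /qint /= !exprVn exprS.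
have hz : x ^+ j != 0 by rewrite expf_neq0.
have h1 := hx1.
have h2 : 1 - x^-1 != 0 by rewrite -(expr1 x^-1) goodqV.
have h3 : x - 1 != 0 by rewrite -oppr_eq0 opprB.
rewrite invfM; field.
by rewrite hz hx0 h1 h3.
Qed.

Lemma qfact_inv m : qfact x^-1 m = x^-1 ^+ 'C(m, 2) * qfact x m.
Proof.
elim: m => [|m IH]; first by rewrite !qfact0 bin0n expr0 mulr1.
by rewrite !qfactS IH qint_inv bin2S exprD /=; ring.
Qed.

Lemma gbin_inv m k : gbin x^-1 m k = x^-1 ^+ (k * (m - k)) * gbin x m k.
Proof.
case: (leqP k m) => hk; last by rewrite !gbin_big // mulr0.
rewrite /gbin hk !qfact_inv.
have -> : 'C(m, 2) = ('C(k, 2) + 'C(m - k, 2) + k * (m - k))%N.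
  by rewrite -bin2D subnKC.
have h1 := qfact_neq0 k hx; have h2 := qfact_neq0 (m - k) hx.
have hi : x^-1 != 0 by rewrite invr_eq0.
rewrite !exprD; field.
by rewrite h1 h2 !expf_neq0.
Qed.

Lemma cfcoef_even a : cfcoef x a.*2 = x * gbin x a.+1 2.
Proof. by rewrite /cfcoef odd_double half_double. Qed.

Lemma cfcoef_odd a : cfcoef x a.*2.+1 = gbin x a.+2 2.
Proof.
rewrite /cfcoef /= odd_double /=.
by rewrite half_double.
Qed.

Definition VV a b := x ^+ (b == a.+1) * (gbin x a.+1 b * gbin x b.+1 a).

Lemma VVup a : VV a a.+1 = cfcoef x a.*2.+2.
Proof. by rewrite /VV eqxx expr1 gbin_nn // mul1r -doubleS cfcoef_even gbin_SSn // gbin_SS2. Qed.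

Lemma VVdn a : VV a.+1 a = cfcoef x a.*2.+1.
Proof.
rewrite /VV (_ : (a == a.+2) = false); last by lia.
by rewrite expr0 mul1r gbin_nn // mulr1 cfcoef_odd gbin_SSn // gbin_SS2.
Qed.

Lemma VVlv a : VV a a = cfcoef x a.*2 + cfcoef x a.*2.+1.
Proof.
rewrite /VV (_ : (a == a.+1) = false); last by lia.
rewrite expr0 mul1r gbin_Sn // cfcoef_even cfcoef_odd.
have q2 : qint x 2 != 0 by apply: qint_neq0.
have h1 := hx1.
case: a => [|a].
  by rewrite gbin_big // mulr0 add0r gbin_nn // qint1 // mulr1.
rewrite !gbin_SS2 //.
move: q2; rewrite /qint !exprS expr0 mulr1 => q2.
field; rewrite h1 /=.
move: q2; rewrite mulf_eq0 negb_or => /andP[-> _] //.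
Qed.

Lemma VV0 a b : (a.+1 < b)%N || (b.+1 < a)%N -> VV a b = 0.
Proof.
case/orP => h; rewrite /VV.
  by rewrite (gbin_big x h) mul0r mulr0.
by rewrite (@gbin_big x b.+1 a h) mulr0 mulr0.
Qed.

Definition psi k a : int := (k * a)%:Z - ('C(a, 2))%:Z.
Definition ee k a b : int := (k%:Z - a%:Z) * (1 - a%:Z + b%:Z).

Lemma edge k a b :
  x ^+ k * x^-1 ^ (ee k a b) * (gbin x^-1 a.+1 b * gbin x^-1 b.+1 a)
  = x ^ (psi k a - psi k.+1 b) * VV a b.
Proof.
rewrite !gbin_inv !exprVn !exprnN exprz_inv (exprnP x k) /VV.
set G1 := gbin x a.+1 b; set G2 := gbin x b.+1 a.
set p := (b * (a.+1 - b))%N; set q := (a * (b.+1 - a))%N.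
have -> : x ^ (k%:Z) * x ^ (- ee k a b) * (x ^ (- p%:Z) * G1 * (x ^ (- q%:Z) * G2))
  = x ^ (k%:Z - ee k a b - p%:Z - q%:Z) * (G1 * G2).
  by rewrite !expfzDr //; ring.
rewrite (exprnP x (b == a.+1)) [RHS]mulrA -expfzDr //.
case: (boolP ((a.+1 < b) || (b.+1 < a))%N) => hab.
  case/orP: hab => h.
    by rewrite /G1 (gbin_big x h) !mul0r !mulr0.
  by rewrite /G2 (gbin_big x h) !mulr0.
congr (x ^ _ * _).
have : b = a.+1 \/ b = a \/ b.+1 = a by lia.
rewrite /p /q /psi /ee.
case=> [->|[->|<-]].
- rewrite eqxx subnn muln0 (_ : (a.+2 - a = 2)%N); last by lia.
  rewrite bin2S; lia.
- rewrite (_ : (a == a.+1) = false); last by lia.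
  rewrite (_ : (a.+1 - a = 1)%N); last by lia.
  lia.
- rewrite (_ : (b == b.+2) = false); last by lia.
  rewrite subnn muln0 (_ : (b.+2 - b = 2)%N); last by lia.
  rewrite bin2S; lia.
Qed.

Lemma fvalE m (f : {ffun 'I_m -> 'I_m.+2}) k : fval (n := m.+1) f k = gf 0 f k.
Proof. by []. Qed.

Lemma gf_end m K a (f : {ffun 'I_m -> 'I_K}) : gf a f m.+1 = 0%N.
Proof. by rewrite /= insubF // ltnn. Qed.

Lemma htilde_sum m : htilde m.+1 x =
  \sum_(f : {ffun 'I_m -> 'I_m.+2}) \prod_(k < m.+1) VV (gf 0 f k) (gf 0 f k.+1).
Proof.
rewrite /htilde /hpoly mulr_sumr; apply: eq_bigr => f _.
have E : fval f =1 gf 0 f := fun k => erefl.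
set g := gf 0 f.
change (fval f) with g.
have g0 : g 0%N = 0%N by [].
have gn : g m.+1 = 0%N by apply: gf_end.
have hy : x^-1 != 0 by rewrite invr_eq0.
have hyg := goodqV.
have ex : x ^+ ((m.+1 * m.+1.-1) %/ 2) = \prod_(k < m.+1) x ^+ k.
  rewrite divn2 -bin2 -bin2_sum big_mkord.
  by rewrite (big_morph (fun n => x ^+ n) (exprD x) (expr0 x)).
have ey : x^-1 ^ (\sum_(1 <= k < m.+1) ee k (g k) (g k.+1))
        = \prod_(k < m.+1) x^-1 ^ (ee k (g k) (g k.+1)).
  rewrite (big_morph (fun z : int => x^-1 ^ z) (fun a b => expfzDr a b hy) (expr0z _)).
  by rewrite -(big_mkord xpredT (fun k => x^-1 ^ ee k (g k) (g k.+1))) [RHS]big_ltn // g0 /ee mul0r expr0z mul1r.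
have e1 : \prod_(1 <= k < m.+1) gbin x^-1 (1 + g k.-1) (g k)
        = \prod_(k < m.+1) gbin x^-1 (g k).+1 (g k.+1).
  rewrite big_add1 /= -(big_mkord xpredT (fun k => gbin x^-1 (g k).+1 (g k.+1))).
  rewrite big_nat_recr // gn gbin_n0 // Monoid.mulm1.
  by apply: eq_bigr.
have e2 : \prod_(1 <= k < m.+1) gbin x^-1 (1 + g k.+1) (g k)
        = \prod_(k < m.+1) gbin x^-1 (g k.+1).+1 (g k).
  by rewrite -(big_mkord xpredT (fun k => gbin x^-1 (g k.+1).+1 (g k))) [RHS]big_ltn // g0 gbin_n0 // mul1r.
clearbody g.
rewrite ex ey e1 e2 -!big_split /=.
under eq_bigr do rewrite mulrA mulrA -mulrA edge.
rewrite big_split /=.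
rewrite -(big_morph (fun z : int => x ^ z) (fun a b => expfzDr a b hx0) (expr0z _)).
have -> : \sum_(i < m.+1) (psi i (g i) - psi i.+1 (g i.+1)) = 0.
  rewrite -(big_mkord xpredT (fun i => psi i (g i) - psi i.+1 (g i.+1))).
  rewrite telescopeN g0 gn /psi !muln0 bin0n; by rewrite subrr.
by rewrite expr0z mul1r.
Qed.

End Gauss.

Lemma qvar_neq0 : qvar != 0.
Proof.
rewrite /qvar -(rmorph0 (@tofrac _)) tofrac_eq.
by apply/eqP => h; have := congr1 (fun p : {poly int} => p`_1) h; rewrite coefX coef0.
Qed.

Lemma qvar_good : goodq qvar.
Proof.
move=> i hi; rewrite /qvar -rmorphXn -(rmorph1 (@tofrac _)) -rmorphB /=.
rewrite -(rmorph0 (@tofrac _)) tofrac_eq.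
apply/eqP => h; have := congr1 (fun p : {poly int} => p`_i) h.
rewrite coefB coef1 coefXn eqxx coef0 (_ : (i == 0%N) = false); last by lia.
by move/eqP; rewrite sub0r oppr_eq0 oner_eq0.
Qed.

Theorem mainTheorem3 :
  forall n : nat, exists N0 : nat, forall N : nat, (N0 <= N)%N ->
    cf qvar 1 N n = htilde n qvar.
Proof.
move=> n; exists n.+1 => N hN.
have h0 := qvar_neq0; have hg := qvar_good.
rewrite (cf_stab qvar 1 (n := n) (d2 := n.*2.+1) hN) //; last by lia.
rewrite (cf_Qs n (M := n.+1) (ltn0Sn n) (VVup hg) (VVdn h0 hg) (VVlv h0 hg) (@VV0 _ qvar) (ltnSn n)).
case: n {hN} => [|m].
  rewrite /= /htilde /hpoly expr0 mul1r.
  rewrite (eq_bigr (fun _ => 1)); last first.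
    by move=> f _; rewrite !big_geq // expr0z !mulr1.
  by rewrite sumr_const card_ffun !card_ord expn0.
by rewrite htilde_sum // (transfer (VV qvar) m.+1 m 0).
Qed.
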